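(* Let $\mathcal{M}\subseteq\mathcal{M}_1$ and $\mathbb{P}\in\mathcal{M}$. Let $\alpha$ be of the form $\alpha(Q)=\widetilde\alpha(Q)$ for $Q\in\mathcal{Q}^{\mathbb{P}}$, $\alpha(Q)=+\infty$ for $Q\in\mathcal{M}_1\setminus\mathcal{Q}^{\mathbb{P}}$, where $\mathcal{Q}^{\mathbb{P}}$ is a weak-$*$-closed subset of $\mathcal{P}^{\mathbb{P}}$, $\widetilde\alpha<\infty$ on $\mathcal{Q}^{\mathbb{P}}$ and $\inf_{\mathcal{Q}^{\mathbb{P}}}\widetilde\alpha>-\infty$. Then for all $X\in\mathcal{X}^{\mathcal{M}}\cap L^\infty(\mathbb{P})$, $\widehat\rho^{\mathcal{M}}(X)=\widehat\rho^{\mathbb{P}}(X)=\rho^{\mathbb{P}}(X)=\rho^{\mathcal{M}}(X)$.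
   Context: $(\Omega,\mathcal{F})$ is a measurable space, $\mathcal{M}_1$ the set of probability measures on it with the topology of weak (weak-$*$) convergence, $\mathcal{X}$ the space of pointwise bounded $\mathcal{F}$-measurable real functions, $L^\infty(P)=L^\infty(\Omega,\mathcal{F},P)$, $\mathcal{P}^P=\{Q\in\mathcal{M}_1:Q\ll P\}$. With $\alpha$ as in the claim, $\rho(X)=\sup_{Q\in\mathcal{M}_1}\{\mathbb{E}_Q[-X]-\alpha(Q)\}$ on $\mathcal{X}$ (assumed real-valued). For $P\in\mathcal{M}_1$, $X\in L^\infty(P)$: $\rho^P(X)=\inf_{\{\widetilde X\in\mathcal{X}:P(\widetilde X=X)=1\}}\rho(\widetilde X)$ and $\widehat\rho^P(X)=\sup_{Q\in\mathcal{P}^P}\{\mathbb{E}_Q[-X]-\alpha(Q)\}$. $\mathcal{X}^{\mathcal{M}}=\bigcap_{P\in\mathcal{M}}L^\infty(P)$, $\rho^{\mathcal{M}}(X)=\sup_{P\in\mathcal{M}}\rho^P(X)$ and $\widehat\rho^{\mathcal{M}}(X)=\sup_{P\in\mathcal{M}}\widehat\rho^P(X)$. *)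

(* Defs.v *)
From HB Require Import structures.
From mathcomp Require Import all_boot all_order all_algebra.
From mathcomp Require Import all_classical all_reals all_analysis.
Set Implicit Arguments. Unset Strict Implicit. Unset Printing Implicit Defensive.
Import Order.TTheory GRing.Theory Num.Theory.
Local Open Scope classical_set_scope.
Local Open Scope ring_scope.

Section defs.
Context (d : measure_display) (T : measurableType d) (R : realType).

Definition bounded_meas (X : T -> R) : Prop :=
  measurable_fun setT X /\ exists c : R, forall x, `|X x| <= c.

Definition Linf (P : probability T R) (X : T -> R) : Prop :=
  measurable_fun setT X /\ exists c : R, {ae P, forall x, `|X x| <= c}.

Definition expect (Q : probability T R) (X : T -> R) : \bar R :=
  (\int[Q]_x (X x)%:E)%E.

(* weak-* closedness in M_1 for the topology σ(M_1, 𝒳): a set S is closed iff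
   it contains every Q all of whose basic neighbourhoods
   {Q' : |E_Q'[X_i] - E_Q[X_i]| < eps, i < n} meet S. *)
Definition weak_closed (S : set (probability T R)) : Prop :=
  forall Q : probability T R,
    (forall (n : nat) (Xs : 'I_n -> T -> R) (eps : R),
        (forall i, bounded_meas (Xs i)) -> 0 < eps ->
        exists Q', S Q' /\
          forall i, (`|expect Q' (Xs i) - expect Q (Xs i)| < eps%:E)%E) ->
    S Q.

Definition rho (alpha : probability T R -> \bar R) (X : T -> R) : \bar R :=
  ereal_sup [set (expect Q (fun x => (- X x)%R) - alpha Q)%E | Q in [set: probability T R]].

Definition rhoP (alpha : probability T R -> \bar R) (P : probability T R)
  (X : T -> R) : \bar R :=
  ereal_inf [set rho alpha Y |
    Y in [set Y | bounded_meas Y /\ P [set x | Y x = X x] = 1%E]].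

Definition rhohatP (alpha : probability T R -> \bar R) (P : probability T R)
  (X : T -> R) : \bar R :=
  ereal_sup [set (expect Q (fun x => (- X x)%R) - alpha Q)%E |
    Q in [set Q : probability T R | Q `<< P]].

Definition rhoM (alpha : probability T R -> \bar R) (M : set (probability T R))
  (X : T -> R) : \bar R :=
  ereal_sup [set rhoP alpha P X | P in M].

Definition rhohatM (alpha : probability T R -> \bar R) (M : set (probability T R))
  (X : T -> R) : \bar R :=
  ereal_sup [set rhohatP alpha P X | P in M].

End defs.

(* Main.v *)
Require Import Defs.
From HB Require Import structures.
From mathcomp Require Import all_boot all_order all_algebra.
From mathcomp Require Import all_classical all_reals all_analysis.
Import Order.TTheory GRing.Theory Num.Theory.
Local Open Scope classical_set_scope.
Local Open Scope ring_scope.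

From mathcomp Require Import measurable_realfun.

Set Implicit Arguments.
Section helpers.
Context (d : measure_display) (T : measurableType d) (R : realType).
Local Open Scope ereal_scope.

Lemma ae_dom (Q P : probability T R) (p : T -> Prop) :
  Q `<< P -> {ae P, forall x, p x} -> {ae Q, forall x, p x}.
Proof.
move=> /null_content_dominatesP h [N [mN PN0 sub]].
by exists N; split => //; exact: h.
Qed.

Lemma expect_ae (Q : probability T R) (Y X : T -> R) :
  measurable_fun setT Y -> measurable_fun setT X ->
  {ae Q, forall x, Y x = X x} ->
  expect Q (fun x => - Y x)%R = expect Q (fun x => - X x)%R.
Proof.
move=> mY mX h; rewrite /expect; apply: ae_eq_integral => //.
- by apply/measurable_EFinP; apply: measurableT_comp.
- by apply/measurable_EFinP; apply: measurableT_comp.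
- by apply: filterS h => x /= -> _.
Qed.

Lemma meas_eq (Y X : T -> R) :
  measurable_fun setT Y -> measurable_fun setT X ->
  measurable [set x | Y x = X x].
Proof.
move=> mY mX.
have h := measurable_fun_eqr mY mX measurableT (measurableT : measurable [set: bool]).
suff -> : [set x | Y x = X x] = [set: T] `&` (fun x => Y x == X x) @^-1` [set true].
  exact: (measurable_fun_eqr mY mX measurableT (_ : measurable [set true])).
apply/seteqP; split => x /=.
- by move=> ->; split => //; rewrite eqxx.
- by move=> [_ /eqP].
Qed.

Lemma prob1_ae (P : probability T R) (Y X : T -> R) :
  measurable_fun setT Y -> measurable_fun setT X ->
  P [set x | Y x = X x] = 1 <-> {ae P, forall x, Y x = X x}.
Proof.
move=> mY mX; have mA := meas_eq mY mX; split.
- move=> h; exists (~` [set x | Y x = X x]); split => //.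
  + exact: measurableC.
  + by rewrite probability_setC // h subee.
- move=> [N [mN PN0 sub]]; apply/eqP; rewrite eq_le probability_le1 //=.
  have : P (~` N) <= P [set x | Y x = X x].
    apply: le_measure; rewrite ?inE //; first exact: measurableC.
    by move=> x nNx; apply: contrapT => hx; apply: nNx; apply: sub.
  by rewrite probability_setC // PN0 sube0.
Qed.

Definition trunc (X : T -> R) (c : R) : T -> R :=
  fun x => if (`|X x| <= c)%R then X x else 0%R.


Lemma trunc_bounded (X : T -> R) c :
  measurable_fun setT X -> bounded_meas (trunc X c).
Proof.
move=> mX; split.
- apply: measurable_fun_ifT => //.
  apply: measurable_fun_ler => //; first exact: measurableT_comp.
- exists `|c|%R => x; rewrite /trunc; case: ifPn => h.
  + exact: le_trans h (ler_norm _).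
  + by rewrite normr0.
Qed.

Lemma trunc_ae (P : probability T R) (X : T -> R) c c' :
  {ae P, forall x, `|X x| <= c'}%R -> (c' <= c)%R ->
  {ae P, forall x, trunc X c x = X x}.
Proof.
move=> h cc; apply: filterS h => x /= h.
by rewrite /trunc (le_trans h cc).
Qed.

Lemma lemA (alpha : probability T R -> \bar R) (QP : set (probability T R))
  (P : probability T R) (Y X : T -> R) :
  QP `<=` [set Q : probability T R | Q `<< P] ->
  (forall Q, ~ QP Q -> alpha Q = +oo%E) ->
  measurable_fun setT Y -> measurable_fun setT X ->
  {ae P, forall x, Y x = X x} ->
  rho alpha Y = rhohatP alpha P X.
Proof.
move=> sub aout mY mX h; apply/eqP; rewrite eq_le; apply/andP; split.
- apply: ge_ereal_sup => _ [Q _ <-].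
  have [QPQ|nQPQ] := pselect (QP Q).
  + have QdP := sub _ QPQ.
    rewrite (expect_ae Q mY mX (ae_dom Q P QdP h)).
    by apply: ereal_sup_ubound; exists Q.
  + by rewrite (aout _ nQPQ) /= addeNy leNye.
- apply: ge_ereal_sup => _ [Q QdP <-].
  rewrite -(expect_ae Q mY mX (ae_dom Q P QdP h)).
  by apply: ereal_sup_ubound; exists Q.
Qed.

End helpers.
Arguments trunc {d T R} X c _.

Theorem corollary5p10 (d : measure_display) (T : measurableType d) (R : realType)
  (M : set (probability T R)) (P : probability T R)
  (alpha alphat : probability T R -> \bar R) (QP : set (probability T R)) :
  M P ->
  weak_closed QP ->
  QP `<=` [set Q : probability T R | Q `<< P] ->
  (forall Q, QP Q -> (alphat Q < +oo)%E) ->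
  (-oo < ereal_inf [set alphat Q | Q in QP])%E ->
  (forall Q, QP Q -> alpha Q = alphat Q) ->
  (forall Q, ~ QP Q -> alpha Q = +oo%E) ->
  (forall Y : T -> R, bounded_meas Y -> rho alpha Y \is a fin_num) ->
  forall X : T -> R,
    (forall P', M P' -> Linf P' X) -> Linf P X ->
    rhohatM alpha M X = rhohatP alpha P X /\
    rhohatP alpha P X = rhoP alpha P X /\
    rhoP alpha P X = rhoM alpha M X.
Proof.
move=> MP _ sub _ _ _ aout _ X LM [mX [c hc]].
have bY := trunc_bounded c mX.
have aeY := trunc_ae P X c c hc (lexx c).
have hP : rhoP alpha P X = rhohatP alpha P X.
  rewrite /rhoP (_ : [set rho alpha Y | Y in _] = [set rhohatP alpha P X]) ?ereal_inf1 //.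
  apply/seteqP; split => [_ [Z [bZ PZ] <-]|_ ->] /=.
  - apply: (lemA alpha P sub aout bZ.1 mX).
    by apply/(prob1_ae P bZ.1 mX).
  - exists (trunc X c); first by split => //; apply/(prob1_ae P bY.1 mX).
    exact: (lemA alpha P sub aout bY.1 mX aeY).
split; last split.
- apply/eqP; rewrite eq_le; apply/andP; split; last first.
    by apply: ereal_sup_ubound; exists P.
  apply: ge_ereal_sup => _ [P' MP' <-]; apply: ge_ereal_sup => _ [Q QdP' <-].
  have [QPQ|nQPQ] := pselect (QP Q).
  + by apply: ereal_sup_ubound; exists Q => //; exact: sub.
  + by rewrite (aout _ nQPQ) /= addeNy leNye.
- by rewrite hP.
- apply/eqP; rewrite eq_le; apply/andP; split.
    by apply: ereal_sup_ubound; exists P.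
  apply: ge_ereal_sup => _ [P' MP' <-].
  have [mX' [c' hc']] := LM P' MP'.
  have bZ := trunc_bounded (Num.max c c') mX.
  apply: (@le_trans _ _ (rho alpha (trunc X (Num.max c c')))).
    apply: ereal_inf_lbound; exists (trunc X (Num.max c c')) => //; split => //.
    apply/(prob1_ae P' bZ.1 mX).
    by apply: (trunc_ae P' X _ c' hc'); rewrite le_max lexx orbT.
  rewrite hP (lemA alpha P sub aout bZ.1 mX) //.
  by apply: (trunc_ae P X _ c hc); rewrite le_max lexx.
Qed.
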